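(* Let $\Gamma\subset\mathbb{R}^2$ be the half-lemniscate $\Gamma=\{(\cos 2\theta\cos\theta,\ \cos2\theta\sin\theta) : |\theta|\le\pi/4\}$ (given in polar coordinates by $r=\cos2\theta$, $|\theta|\le\pi/4$). Let $T$ be a triangle with vertices $A,B,C$ such that $|CA|=|CB|$, the segment $AB$ is vertical, $C$ lies strictly to the left of the line $AB$, and the angle of $T$ at $C$ is obtuse. Then there is no composition $\phi$ of a translation and a homothety with positive ratio such that $\phi(A),\phi(B),\phi(C)$ all lie on $\Gamma$. In particular, the conclusion of the Main Theorem (every non-flat triangle can be placed with its vertices on the curve by a translation and a positive homothety) fails for this Jordan curve, which is $\mathcal{C}^\infty$ except at the origin, where it has two tangents forming a right angle. *)

(* Defs.v *)
From Stdlib Require Import Reals.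
Open Scope R_scope.

Definition on_Gamma (p : R * R) : Prop :=
  exists th : R, - (PI / 4) <= th <= PI / 4 /\
    p = (cos (2 * th) * cos th, cos (2 * th) * sin th).

(* Composition of a positive homothety of ratio k and a translation by (a,b):
   p |-> k p + (a,b).  (Any such composition, in either order, has this form.) *)
Definition hom_trans (k a b : R) (p : R * R) : R * R :=
  (k * fst p + a, k * snd p + b).

Definition dist2 (p q : R * R) : R :=
  (fst p - fst q) ^ 2 + (snd p - snd q) ^ 2.

Definition dot_at (c p q : R * R) : R :=
  (fst p - fst c) * (fst q - fst c) + (snd p - snd c) * (snd q - snd c).

(* Main.v *)
Require Import Defs.
From Stdlib Require Import Reals Lra Psatz.
Open Scope R_scope.

Lemma core (p1 q1 p2 q2 : R) : 0<=p1 -> 0<=q1 -> 0<=p2 -> 0<=q2 ->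
  p1^2+q1^2=2 -> p2^2+q2^2=2 -> 0 <= p1*q1*(q1-p1) ->
  p1*q1*(p1+q1) < p2*q2*(p2+q2) -> p1^2*q1 <= p2^2*q2.
Proof.
intros h1 h2 h3 h4 e1 e2 hy hx.
destruct (Rle_or_lt (p1^2*q1) (p2^2*q2)) as [H|H]; [exact H|exfalso].
assert (hp1 : 0 < p1) by (destruct h1 as [h1|h1]; [lra| subst; nra]).
assert (hq1 : 0 < q1) by (destruct h2 as [h2|h2]; [lra| subst; nra]).
assert (hqp1 : p1 <= q1).
{ destruct (Rle_or_lt p1 q1); auto. assert (0 < p1*q1) by nra. nra. }
destruct (Rle_or_lt (q2*p1) (q1*p2)) as [C|C].
- assert (hp2 : 0 < p2).
  { destruct h3 as [h3|h3]; auto. subst. assert (q2 = 0) by nra. subst. nra. }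
  assert (K : p2*q2^2*(p1*p2) <= p1*q1^2*(p1*p2)).
  { assert (p2^2*q2*(q2*p1) <= p2^2*q2*(q1*p2)) by (apply Rmult_le_compat_l; [apply Rmult_le_pos; [apply pow_le|]|]; lra).
    assert (p2^2*q2*(q1*p2) <= p1^2*q1*(q1*p2)) by (apply Rmult_le_compat_r; [apply Rmult_le_pos|]; lra).
    nra. }
  assert (K2 : p2*q2^2 <= p1*q1^2).
  { apply (Rmult_le_reg_r (p1*p2)); nra. }
  nra.
- assert (hq2p2 : p2 < q2) by nra.
  assert (hm : p1*q1*(p2^2+q2^2) - p2*q2*(p1^2+q1^2) = (q2*p1 - q1*p2)*(q1*q2 - p1*p2)) by ring.
  assert (hpos : 0 < q1*q2 - p1*p2) by nra.
  rewrite e1, e2 in hm.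
  assert (0 < (q2*p1 - q1*p2)*(q1*q2 - p1*p2)) by (apply Rmult_lt_0_compat; lra).
  assert (hm2 : p2*q2 < p1*q1) by lra.
  assert (hs : p2+q2 < p1+q1).
  { assert ((p2+q2)^2 < (p1+q1)^2) by nra. nra. }
  assert (p2*q2*(p2+q2) <= p1*q1*(p1+q1)).
  { apply Rmult_le_compat; nra. }
  lra.
Qed.

Lemma gamma_param (pt : R*R) : on_Gamma pt ->
  exists c s, c^2+s^2=1 /\ 0 <= c /\ s^2 <= c^2 /\
    pt = ((c^2-s^2)*c, (c^2-s^2)*s).
Proof.
intros [th [[h1 h2] ->]].
exists (cos th), (sin th).
assert (PI > 0) by apply PI_RGT_0.
assert (0 <= cos th) by (apply cos_ge_0; lra).
assert (0 <= cos (2*th)) by (apply cos_ge_0; lra).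
rewrite cos_2a in *.
pose proof (sin2_cos2 th). unfold Rsqr in *.
repeat split; try nra; f_equal; ring.
Qed.

Lemma keyL (C P : R*R) : on_Gamma C -> on_Gamma P -> 0 <= snd C ->
  fst C < fst P -> snd P - snd C <= fst P - fst C.
Proof.
intros hC hP hy hx.
destruct (gamma_param _ hC) as [c1 [s1 [e1 [g1 [k1 ->]]]]].
destruct (gamma_param _ hP) as [c2 [s2 [e2 [g2 [k2 ->]]]]].
simpl in *.
assert (a1 : 0 <= c1 - s1) by nra. assert (b1 : 0 <= c1 + s1) by nra.
assert (a2 : 0 <= c2 - s2) by nra. assert (b2 : 0 <= c2 + s2) by nra.
pose proof (core (c1-s1) (c1+s1) (c2-s2) (c2+s2) a1 b1 a2 b2
  ltac:(nra) ltac:(nra) ltac:(nra) ltac:(nra)).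
nra.
Qed.

Lemma refl_gamma (x y : R) : on_Gamma (x,y) -> on_Gamma (x,-y).
Proof.
intros [th [[h1 h2] E]]. injection E; intros -> ->.
exists (-th). split; [lra|].
replace (2*-th) with (-(2*th)) by ring.
rewrite !cos_neg, sin_neg. f_equal. ring.
Qed.

Theorem mainTheorem2 (A B C : R * R)
  (hiso : dist2 C A = dist2 C B)
  (hvert : fst A = fst B)
  (hAB : snd A <> snd B)
  (hleft : fst C < fst A)
  (hobtuse : dot_at C A B < 0) :
  ~ (exists k a b : R, 0 < k /\
       on_Gamma (hom_trans k a b A) /\
       on_Gamma (hom_trans k a b B) /\
       on_Gamma (hom_trans k a b C)).
Proof.
intros [k [a [b [hk [hA [hB hC]]]]]].
destruct A as [xA yA]; destruct B as [xB yB]; destruct C as [xC yC].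
unfold dist2, dot_at, hom_trans in *; simpl in *.
subst xB.
assert (hmid : 2*yC = yA + yB).
{ assert ((yA - yB)*(yA+yB-2*yC) = 0) by nra.
  destruct (Rmult_integral _ _ H) as [H1|H1]; [exfalso; apply hAB; lra | lra]. }
assert (hxl : k*xC + a < k*xA + a) by nra.
assert (Hb : Rabs (k*yA - k*yC) <= k*xA - k*xC /\ Rabs (k*yB - k*yC) <= k*xA - k*xC).
{ destruct (Rle_or_lt 0 (k*yC+b)) as [Y|Y].
  - pose proof (keyL _ _ hC hA Y hxl). pose proof (keyL _ _ hC hB Y hxl).
    simpl in *. split; apply Rabs_le; split; nra.
  - pose proof (refl_gamma _ _ hA). pose proof (refl_gamma _ _ hB).
    pose proof (refl_gamma _ _ hC).
    assert (Y' : 0 <= -(k*yC+b)) by lra.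
    pose proof (keyL _ _ H1 H Y' hxl). pose proof (keyL _ _ H1 H0 Y' hxl).
    simpl in *. split; apply Rabs_le; split; nra. }
destruct Hb as [H1 H2].
pose proof (Rle_abs (k*yA - k*yC)). pose proof (Rle_abs (-(k*yA - k*yC))). rewrite Rabs_Ropp in *.
pose proof (Rle_abs (k*yB - k*yC)). pose proof (Rle_abs (-(k*yB - k*yC))). rewrite Rabs_Ropp in *.
nra.
Qed.
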